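(* Let $\mathcal{X}$ and $\mathcal{Y}$ be infinite-dimensional Banach spaces with Schauder bases $\{x_n\}_{n\ge1}$ and $\{y_n\}_{n\ge1}$, and let $\mathcal{F}$ be a universal approximator. For every continuous (non-linear) operator $f:\mathcal{X}\to\mathcal{Y}$, every $\varepsilon>0$ and every compact $K\subseteq\mathcal{X}$ there exist $n,N,\tilde Q\in\mathbb{N}_+$, $\hat f\in\bigcup_c\mathcal{F}_{n,N,c}$ and real numbers $\tilde z_{j,i}$ ($j\le N$, $i\le\tilde Q$) such that $$\hat t(x)=\sum_{j=1}^N\sum_{i=1}^{\tilde Q}\Big[P_{\Delta_N}\circ\hat f\big((\beta^x_k)_{k=1}^n\big)\Big]_j\,\tilde z_{j,i}\,y_i$$ satisfies $\sup_{x\in K}\|f(x)-\hat t(x)\|_{\mathcal{Y}}<\varepsilon$, where $x=\sum_k\beta^x_kx_k$ is the Schauder expansion of $x$.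
   Context: $P_{\Delta_N}$ is the Euclidean orthogonal projection of $\mathbb{R}^N$ onto the simplex $\Delta_N$. A universal approximator is a family $\mathcal{F}=\{\mathcal{F}_{n,m,c}\}$ of sets of maps $\mathbb{R}^n\to\mathbb{R}^m$, nested in $c$, with a rate function $r(\omega,K,n,m,c)$ decreasing to $0$ in $c$, such that every uniformly continuous $f:\mathbb{R}^n\to\mathbb{R}^m$ with continuous modulus $\omega$ is approximated on every compact $K$ within $r(\omega,K,n,m,c)$ by some element of $\mathcal{F}_{n,m,c}$. *)

(* Defs.v *)
From HB Require Import structures.
From mathcomp Require Import all_boot all_order all_algebra.
From mathcomp Require Import all_classical all_reals all_analysis.
Set Implicit Arguments. Unset Strict Implicit. Unset Printing Implicit Defensive.
Import Order.TTheory GRing.Theory Num.Theory.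
Import numFieldNormedType.Exports.
Local Open Scope classical_set_scope.
Local Open Scope ring_scope.

Definition eucl_norm {R : realType} {n : nat} (v : 'rV[R]_n) : R :=
  Num.sqrt (\sum_(j < n) (v 0 j) ^+ 2).

Definition simplex {R : realType} (N : nat) : set 'rV[R]_N :=
  [set p | (forall j, 0 <= p 0 j) /\ \sum_(j < N) p 0 j = 1].

Definition is_simplex_proj {R : realType} {N : nat} (v p : 'rV[R]_N) : Prop :=
  @simplex R N p /\ forall q, @simplex R N q -> eucl_norm (v - p) <= eucl_norm (v - q).

(* P_{Delta_N}: the (unique, when N > 0) Euclidean projection onto Delta_N. *)
Definition proj_simplex {R : realType} {N : nat} (v : 'rV[R]_N) : 'rV[R]_N :=
  xget 0 [set p | is_simplex_proj v p].

Definition cont_modulus {R : realType} {n m : nat}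
  (omega : R -> R) (g : 'rV[R]_n -> 'rV[R]_m) : Prop :=
  continuous omega /\ omega 0 = 0 /\
  forall x y, eucl_norm (g x - g y) <= omega (eucl_norm (x - y)).

Definition universal_approximator {R : realType}
  (F : forall n m : nat, nat -> set ('rV[R]_n -> 'rV[R]_m)) : Prop :=
  (forall n m (c c' : nat), (c <= c')%N -> F n m c `<=` F n m c') /\
  exists r : forall n m : nat, (R -> R) -> set 'rV[R]_n -> nat -> R,
    (forall n m omega (K : set 'rV[R]_n), continuous omega -> compact K ->
       {homo r n m omega K : c c' / (c <= c')%N >-> c' <= c} /\
       r n m omega K @ \oo --> 0) /\
    (forall n m (g : 'rV[R]_n -> 'rV[R]_m) omega (K : set 'rV[R]_n) (c : nat),
       cont_modulus omega g -> compact K ->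
       exists2 h, F n m c h &
         forall x, K x -> eucl_norm (g x - h x) <= r n m omega K c).

Definition schauder_partial {R : realType} {X : normedModType R}
  (b : nat -> X) (beta : nat -> R) (k : nat) : X :=
  \sum_(0 <= i < k) beta i *: b i.

Definition schauder_basis {R : realType} {X : normedModType R} (b : nat -> X) : Prop :=
  forall x : X,
    (exists beta : nat -> R, schauder_partial b beta @ \oo --> x) /\
    (forall beta gamma : nat -> R,
       schauder_partial b beta @ \oo --> x ->
       schauder_partial b gamma @ \oo --> x -> beta = gamma).

Definition schauder_coef {R : realType} {X : normedModType R}
  (b : nat -> X) (x : X) : nat -> R :=
  xget (fun=> 0) [set beta | schauder_partial b beta @ \oo --> x].

(* The vector (beta^x_k)_{k=1}^n (0-indexed here). *)
Definition coef_vec {R : realType} {X : normedModType R}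
  (b : nat -> X) (n : nat) (x : X) : 'rV[R]_n :=
  \row_(k < n) schauder_coef b x k.

(* Main.v *)
Require Import Defs.
From HB Require Import structures.
From mathcomp Require Import all_boot all_order all_algebra.
From mathcomp Require Import all_classical all_reals all_analysis.
From mathcomp Require Import ring lra.
Import Order.TTheory GRing.Theory Num.Theory.
Import numFieldNormedType.Exports.
Local Open Scope classical_set_scope.
Local Open Scope ring_scope.
Lemma lip_cont {R : realType} (V W : normedModType R) (f : V -> W) (k : R) :
  (forall x y, `|f x - f y| <= k * `|x - y|) -> continuous f.
Proof.
move=> H x; apply/cvgrPdist_le => e e0.
have kp : 0 < `|k| + 1 by rewrite ltr_wpDl.
near=> y.
apply: (le_trans (H _ _)).
have : `|x - y| <= e / (`|k| + 1).
  near: y; apply: cvgr_dist_le; [exact: cvg_id| by rewrite divr_gt0].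
move=> h.
rewrite (le_trans (ler_wpM2r _ (ler_norm k)))//.
apply: le_trans (ler_wpM2l (normr_ge0 _) h) _.
rewrite mulrA ler_pdivrMr // mulrDr mulr1 mulrC lerDl; exact: ltW.
Unshelve. all: by end_near. Qed.

Section Proj.
Variables (R : realType) (N : nat).
Implicit Types u p q : 'rV[R]_N.

Lemma lemaxl (x : R) : x <= Num.max x 0.
Proof. by rewrite le_max lexx. Qed.

Definition ppos u (t : R) : 'rV[R]_N := \row_j Num.max (u 0 j - t) 0.
Definition phi u (t : R) : R := \sum_j Num.max (u 0 j - t) 0.

Lemma maxr0_cases (c : R) : (0 <= c /\ Num.max c 0 = c) \/ (c < 0 /\ Num.max c 0 = 0).
Proof.
have [h|h] := leP 0 c.
  by left; split => //; apply/max_idPl.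
by right; split => //; apply/max_idPr/ltW.
Qed.

Lemma eucl_norm_le (a b : 'rV[R]_N) :
  \sum_j (a 0 j)^+2 <= \sum_j (b 0 j)^+2 -> eucl_norm a <= eucl_norm b.
Proof. by move=> h; rewrite /eucl_norm ler_sqrt // sumr_ge0 // => j _; exact: sqr_ge0. Qed.

Lemma eucl_norm_leE (a b : 'rV[R]_N) :
  eucl_norm a <= eucl_norm b -> \sum_j (a 0 j)^+2 <= \sum_j (b 0 j)^+2.
Proof. by rewrite /eucl_norm ler_sqrt // sumr_ge0 // => j _; exact: sqr_ge0. Qed.

Lemma key_ineq u t q : phi u t = 1 -> simplex q ->
  \sum_j ((u - ppos u t) 0 j)^+2 + \sum_j ((ppos u t - q) 0 j)^+2
    <= \sum_j ((u - q) 0 j)^+2.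
Proof.
move=> ph [q0 q1].
have H j : ((u - ppos u t) 0 j)^+2 + ((ppos u t - q) 0 j)^+2 + 2 * t * ((ppos u t) 0 j - q 0 j)
   <= ((u - q) 0 j)^+2.
  rewrite !mxE; have := q0 j.
  case: (maxr0_cases (u 0 j - t)) => [[h ->]|[h ->]] qj; nra.
have := (ler_sum (index_enum _) (fun j _ => H j)) : \sum_j _ <= \sum_j _.
rewrite big_split /= big_split /= -mulr_sumr sumrB q1.
suff -> : \sum_j (ppos u t) 0 j = 1 by rewrite subrr mulr0 addr0.
by rewrite -ph; apply: eq_bigr => j _; rewrite mxE.
Qed.

Lemma ppos_simplex u t : phi u t = 1 -> simplex (ppos u t).
Proof.
move=> ph; split => [j|]; first by rewrite mxE le_max lexx orbT.
by rewrite -ph; apply: eq_bigr => j _; rewrite mxE.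
Qed.

Lemma proj_simplex_spec u t : phi u t = 1 -> proj_simplex u = ppos u t.
Proof.
move=> ph; set p := ppos u t.
have Pp : is_simplex_proj u p.
  split; first exact: ppos_simplex.
  move=> q sq; apply: eucl_norm_le; apply: le_trans (@key_ineq u t q ph sq); rewrite lerDl.
  by apply: sumr_ge0 => j _; exact: sqr_ge0.
have : is_simplex_proj u (proj_simplex u) by apply: (xgetPex 0); exists p.
set p' := proj_simplex u; move=> [sp' mp'].
have h1 := eucl_norm_leE _ _ (mp' p (@ppos_simplex u t ph)).
have h2 := @key_ineq u t p' ph sp'.
have h3 : \sum_j ((p - p') 0 j)^+2 <= 0 by lra.
have h4 : \sum_j ((p - p') 0 j)^+2 = 0.
  by apply/eqP; rewrite eq_le h3 sumr_ge0 // => j _; exact: sqr_ge0.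
apply/matrixP => i j; rewrite (ord1 i).
have /eqP := (psumr_eq0P (fun j _ => sqr_ge0 _) h4) j isT.
by rewrite !mxE sqrf_eq0 subr_eq0 => /eqP.
Qed.


Lemma phi_lip u (s t : R) : `|phi u s - phi u t| <= N%:R * `|s - t|.
Proof.
rewrite /phi -sumrB (le_trans (ler_norm_sum _ _ _))//.
have -> : N%:R * `|s - t| = \sum_(j < N) `|s - t|.
  by rewrite sumr_const card_ord mulr_natl.
apply: ler_sum => j _.
case: (maxr0_cases (u 0 j - s)) => [[h ->]|[h ->]];
case: (maxr0_cases (u 0 j - t)) => [[h' ->]|[h' ->]].
- rewrite (_ : _ - _ = t - s); last by ring.
  by rewrite distrC.
- rewrite subr0 ger0_norm // (distrC s t); have := ler_norm (t - s); lra.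
- rewrite sub0r normrN ger0_norm //; have := ler_norm (s - t); lra.
- by rewrite subrr normr0.
Qed.

Lemma phi_cont u : continuous (phi u : R -> R).
Proof. by apply: (@lip_cont R R R _ N%:R) => x y; exact: phi_lip. Qed.

Lemma exists_tau u : (0 < N)%N ->
  exists t, phi u t = 1 /\ forall j, u 0 j - 1 <= t.
Proof.
move=> N0; set S := \sum_(j < N) `|u 0 j|.
have uS j : `|u 0 j| <= S.
  rewrite /S (bigD1 j) //= lerDl sumr_ge0 // => i _.
have phib : phi u S = 0.
  apply: big1 => j _; apply/max_idPr.
  by rewrite subr_le0 (le_trans (ler_norm _)).
have phia : 1 <= phi u (- S - 1).
  set j0 := Ordinal N0.
  have h0 : 1 <= Num.max (u 0 j0 - (- S - 1)) 0.
    apply: le_trans (lemaxl _); have := uS j0.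
    have := ler_norm (- u 0 j0); rewrite normrN; lra.
  rewrite /phi (bigD1 j0) //=; apply: (le_trans h0); rewrite lerDl.
  by apply: sumr_ge0 => i _; rewrite le_max lexx orbT.
have S0 : 0 <= S by rewrite sumr_ge0.
have [t _ pt] : exists2 t, t \in `[(- S - 1), S] & phi u t = 1.
  apply: IVT.
  - lra.
  - by move=> x; apply: continuous_subspaceT => y; exact: phi_cont.
  - rewrite phib; apply/andP; split; [by rewrite ge_min ler01 orbT|by rewrite le_max phia].
exists t; split => // j; rewrite leNgt; apply/negP => lt.
have : 1 < phi u t.
  have h0 : 1 < Num.max (u 0 j - t) 0 by apply: lt_le_trans (lemaxl _); lra.
  rewrite /phi (bigD1 j) //=; apply: (lt_le_trans h0); rewrite lerDl.
  by apply: sumr_ge0 => i _; rewrite le_max lexx orbT.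
by rewrite pt ltxx.
Qed.

Lemma proj_simplex_support u (k j : 'I_N) :
  u 0 k + 1 <= u 0 j -> (proj_simplex u) 0 k = 0.
Proof.
move=> ukj.
have N0 : (0 < N)%N by case: N k {ukj j u} => [[]|].
have [t [pt ht]] := exists_tau u N0.
rewrite (@proj_simplex_spec u t pt) mxE; apply/max_idPr.
have := ht j; lra.
Qed.

Lemma proj_simplex_in u : (0 < N)%N -> simplex (proj_simplex u).
Proof.
move=> N0; have [t [pt _]] := exists_tau u N0.
rewrite (@proj_simplex_spec u t pt); exact: (@ppos_simplex u t pt).
Qed.
End Proj.
Section Eucl.
Variable R : realType.

Lemma sum_sq_le (I : Type) (s : seq I) (F : I -> R) : (forall i, 0 <= F i) ->
  \sum_(i <- s) F i ^+ 2 <= (\sum_(i <- s) F i) ^+ 2.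
Proof.
move=> F0; elim: s => [|a s IH]; first by rewrite !big_nil expr0n.
rewrite !big_cons.
have S0 : 0 <= \sum_(i <- s) F i by apply: sumr_ge0.
have := F0 a; nra.
Qed.

Lemma eucl_le_sum n (a : 'rV[R]_n) : eucl_norm a <= \sum_j `|a 0 j|.
Proof.
rewrite /eucl_norm -(@ger0_norm _ (\sum_j `|a 0 j|)) ?sumr_ge0 //.
rewrite -sqrtr_sqr ler_sqrt ?sqr_ge0 //.
have -> : \sum_j a 0 j ^+ 2 = \sum_j `|a 0 j| ^+ 2.
  by apply: eq_bigr => j _; rewrite real_normK // num_real.
exact: sum_sq_le.
Qed.

Lemma coord_le_eucl n (a : 'rV[R]_n) j : `|a 0 j| <= eucl_norm a.
Proof.
rewrite /eucl_norm -sqrtr_sqr ler_sqrt ?sumr_ge0 // => [|i _]; last exact: sqr_ge0.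
rewrite (bigD1 j) //= lerDl sumr_ge0 // => i _; exact: sqr_ge0.
Qed.

Lemma eucl_ge0 n (a : 'rV[R]_n) : 0 <= eucl_norm a.
Proof. exact: sqrtr_ge0. Qed.
End Eucl.

Section Banach.
Variables (R : realType) (X : completeNormedModType R) (xb : nat -> X).
Hypothesis basis : schauder_basis xb.

Local Notation coef := (schauder_coef xb).
Local Notation SP := (schauder_partial xb).
Definition PP (n : nat) (x : X) : X := SP (coef x) n.

Lemma coef_spec x : SP (coef x) @ \oo --> x.
Proof.
rewrite /schauder_coef.
apply: (@xgetPex _ (fun=> 0) [set beta | SP beta @ \oo --> x]).
by case: (basis x).
Qed.

Lemma coef_uniq x beta : SP beta @ \oo --> x -> beta = coef x.
Proof. by move=> h; case: (basis x) => _ /(_ beta (coef x) h (coef_spec x)). Qed.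

Lemma SP_lin a (b c : nat -> R) n :
  SP (fun k => a * b k + c k) n = a *: SP b n + SP c n.
Proof.
rewrite /schauder_partial scaler_sumr -big_split /=; apply: eq_bigr => i _.
by rewrite scalerDl scalerA.
Qed.

Lemma coef_lin a x y : coef (a *: x + y) = (fun k => a * coef x k + coef y k).
Proof.
apply/esym/coef_uniq.
have -> : SP (fun k => a * coef x k + coef y k) =
    (fun n => a *: SP (coef x) n + SP (coef y) n) by apply/funext => n; exact: SP_lin.
apply: cvgD; last exact: coef_spec.
apply: cvgZ; [exact: cvg_cst | exact: coef_spec].
Qed.

Lemma PP_lin a x y n : PP n (a *: x + y) = a *: PP n x + PP n y.
Proof. by rewrite /PP coef_lin SP_lin. Qed.

Lemma PP_B x y n : PP n (x - y) = PP n x - PP n y.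
Proof.
have := PP_lin (-1) y x n; rewrite scaleN1r addrC => ->.
by rewrite scaleN1r addrC.
Qed.

Lemma PP0 n : PP n 0 = 0.
Proof. by have := PP_B 0 0 n; rewrite subrr => ->; rewrite subrr. Qed.

Lemma PP_Z a x n : PP n (a *: x) = a *: PP n x.
Proof. by have := PP_lin a x 0 n; rewrite !addr0 PP0 addr0. Qed.

Lemma PP_cvg x : PP n x @[n --> \oo] --> x.
Proof. exact: coef_spec. Qed.

Lemma PPS n x : PP n.+1 x = PP n x + coef x n *: xb n.
Proof. by rewrite /PP /schauder_partial big_nat_recr. Qed.

Lemma xb_neq0 k : xb k != 0.
Proof.
apply/negP => /eqP xk0.
have h : SP (fun i => (i == k)%:R) @ \oo --> (0 : X).
  apply: cvg_near_cst; near=> n; apply: big1 => i _.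
  by case: eqP => [->|_]; rewrite ?xk0 ?scaler0 // scale0r.
have h0 : SP (fun=> 0) @ \oo --> (0 : X).
  apply: cvg_near_cst; near=> m; apply: big1 => i _; by rewrite scale0r.
have := coef_uniq _ _ h; rewrite -(coef_uniq _ _ h0) => /(congr1 (fun f => f k)).
by rewrite eqxx => /eqP; rewrite oner_eq0.
Unshelve. all: by end_near. Qed.

Definition AA (m : nat) : set X := [set x | forall n, `|PP n x| <= m%:R].

Lemma AA_cover x : exists m, AA m x.
Proof.
have := cvg_seq_bounded (cvgP _ (PP_cvg x)).
case=> M0 [_ HM].
have := HM (`|M0| + 1); rewrite (lt_le_trans (ltr_pwDr ltr01 (ler_norm M0))) // => /(_ isT) hb.
exists (Num.trunc (`|M0| + 1)).+1 => n.
apply: (le_trans (hb n I)); apply/ltW; exact: truncnS_gt.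
Qed.

Lemma baire_step : exists (m : nat) (x0 : X) (rho : R),
  0 < rho /\ ball x0 rho `<=` closure (AA m).
Proof.
have : ~ (forall m, dense (~` closure (AA m))).
  move=> hd.
  have D := @Baire R X (fun m => ~` closure (AA m))
    (fun i => conj (closed_openC (@closed_closure _ _)) (hd i)).
  have [x [_ hx]] : setT `&` (\bigcap_i ~` closure (AA i)) !=set0.
    apply: D; [by exists 0 | exact: openT].
  have [m Am] := AA_cover x.
  by apply: (hx m I); apply: subset_closure.
move/existsNP => [m /denseNE [U0 [[x0 ox0] OD]]].
have /nbhs_ballP [rho /= rho0 Hb] := open_nbhs_nbhs ox0.
exists m, x0, rho; split => // y /Hb Oy.
apply: contrapT => ncl.
have : (U0 `&` ~` closure (AA m)) y by [].

by rewrite OD.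
Qed.

Lemma zmod_id (V: zmodType) (x0 e a b : V) : (x0 + e - a) - (x0 - b) = e - (a - b).
Proof. by rewrite opprB addrC !addrA subrK opprB addrA (addrC b). Qed.

Lemma closure_ball (A : set X) y (g : R) : closure A y -> 0 < g ->
  exists a, A a /\ `|y - a| < g.
Proof.
move=> cy g0; have [a [Aa ba]] := cy _ (nbhsx_ballx y g g0).
by exists a; split => //; move: ba; rewrite -ball_normE.
Qed.

Lemma approx : exists2 M : R, 0 < M & forall e : X, exists y : X,
  (forall n, `|PP n y| <= M * `|e|) /\ `|e - y| <= `|e| / 2.
Proof.
have [m [x0 [rho [rho0 Hb]]]] := baire_step.
have m0 : 0 <= m%:R :> R by [].
exists (4 * m%:R / rho + 1); first by rewrite ltr_wpDl // divr_ge0 // ?mulr_ge0 // ltW.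
move=> e; have [->|e0] := eqVneq e 0.
  exists 0; split => [n|]; first by rewrite PP0 !normr0 mulr0.
  by rewrite subrr normr0 mul0r.
have ne0 : 0 < `|e| by rewrite normr_gt0.
set s := rho / (2 * `|e|).
have s0 : 0 < s by rewrite divr_gt0 // mulr_gt0.
set e' := s *: e.
have ne' : `|e'| = rho / 2.
  rewrite /e' normrZ ger0_norm ?ltW // /s; field; exact: lt0r_neq0.
set g := rho / 8.
have g0 : 0 < g by rewrite divr_gt0.
have [a [Aa ha]] : exists a, AA m a /\ `|(x0 + e') - a| < g.
  apply: closure_ball => //; apply: Hb.
  rewrite -ball_normE /ball_ /= opprD addrA subrr sub0r normrN ne'.
  by rewrite ltr_pdivrMr // ltr_pMr // ltr1n.
have [b [Ab hb]] : exists b, AA m b /\ `|x0 - b| < g.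
  by apply: closure_ball => //; apply: Hb; exact: ballxx.
exists (s^-1 *: (a - b)); split => [n|].
  rewrite PP_Z PP_B normrZ ger0_norm; last by rewrite invr_ge0 ltW.
  have h1 : `|PP n a - PP n b| <= m%:R + m%:R :=
    le_trans (ler_normB _ _) (lerD (Aa n) (Ab n)).
  have si : 0 <= s^-1 by rewrite invr_ge0 ltW.
  apply: le_trans (ler_wpM2l si h1) _.
  have -> : s^-1 * (m%:R + m%:R) = 4 * m%:R / rho * `|e|.
    by rewrite /s; field; rewrite !lt0r_neq0.
  by rewrite [X in _ <= X]mulrDl mul1r lerDl normr_ge0.
have -> : e - s^-1 *: (a - b) = s^-1 *: ((x0 + e' - a) - (x0 - b)).
  by rewrite zmod_id [in RHS]scalerBr /e' scalerA mulVf ?scale1r // lt0r_neq0.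
rewrite normrZ ger0_norm; last by rewrite invr_ge0 ltW.
have h1 : `|(x0 + e' - a) - (x0 - b)| <= g + g :=
  le_trans (ler_normB _ _) (lerD (ltW ha) (ltW hb)).
have si : 0 <= s^-1 by rewrite invr_ge0 ltW.
apply: le_trans (ler_wpM2l si h1) _.
have -> : s^-1 * (g + g) = `|e| / 2.
  by rewrite /s /g; field; rewrite !lt0r_neq0.
by [].
Qed.
Lemma zmod_id2 (V: zmodType) (a b c d : V) : (a - b) - (c - d) = (a - c) - (b - d).
Proof. by rewrite !opprB !addrA [LHS]addrAC [RHS]addrAC (addrAC a). Qed.

Lemma geo_small (K d : R) : 0 < d -> \forall I \near \oo, K * (2^-1) ^+ I < d.
Proof.
move=> d0.
have h : K * (2^-1 : R) ^+ I @[I --> \oo] --> K * 0.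
  apply: cvgM; first exact: cvg_cst.
  by apply: cvg_expr; rewrite ger0_norm ?invr_ge0 // invf_lt1 // ltr1n.
rewrite mulr0 in h.
apply: (filterS _ (cvgr_dist_lt _ _ h _ d0)) => I /=.
rewrite sub0r normrN; apply: le_lt_trans; exact: ler_norm.
Qed.

Lemma PP_bounded : exists2 C : R, 0 < C & forall n x, `|PP n x| <= C * `|x|.
Proof.
have [M M0 HM] := approx.
have [phi Hphi] := choice HM.
exists (2 * M); first by rewrite mulr_gt0.
move=> n x.
pose h : R := 2^-1.
have h0 : 0 <= h by rewrite /h invr_ge0.
pose e i := iter i (fun z => z - phi z) x.
have eS i : e i.+1 = e i - phi (e i) by [].
have en i : `|e i| <= `|x| * h ^+ i.
  elim: i => [|i IH]; first by rewrite expr0 mulr1.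
  rewrite eS; apply: le_trans (proj2 (Hphi (e i))) _.
  have -> : `|x| * h ^+ i.+1 = (`|x| * h ^+ i) / 2 by rewrite exprS /h; field.
  by rewrite ler_wpM2r // invr_ge0.
pose B i := 2 * M * `|x| * h ^+ i.
have B0 i : 0 <= B i by rewrite /B !mulr_ge0 // ?exprn_ge0 // ltW.
have Pphi i k : `|PP k (phi (e i))| <= M * `|x| * h ^+ i.
  apply: le_trans ((Hphi _).1 k) _; rewrite -mulrA.
  by apply: ler_wpM2l; [exact: ltW | exact: en].
have cauchyP k I d : `|PP k (e I) - PP k (e (I + d)%N)| <= B I - B (I + d)%N.
  elim: d => [|d IH]; first by rewrite addn0 !subrr normr0.
  rewrite addnS eS PP_B opprB addrCA.
  apply: le_trans (ler_normD _ _) _.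
  have -> : B I - B (I + d).+1 = M * `|x| * h ^+ (I + d) + (B I - B (I + d)%N).
    by rewrite /B exprS /h; field.
  exact: lerD.
have cauchyB k I J : (I <= J)%N -> `|PP k (e I) - PP k (e J)| <= B I.
  move=> IJ; have := cauchyP k I (J - I)%N; rewrite subnKC // => h1.
  apply: le_trans h1 _.
  by rewrite lerBlDr lerDl.
have cS z k : coef z k *: xb k = PP k.+1 z - PP k z.
  by rewrite PPS addrC addKr.
have ccauchy k I J : (I <= J)%N ->
    `|coef (e I) k - coef (e J) k| <= 2 * B I / `|xb k|.
  move=> IJ.
  have nxb : 0 < `|xb k| by rewrite normr_gt0 xb_neq0.
  rewrite ler_pdivlMr // -normrZ scalerBl !cS zmod_id2.
  apply: le_trans (ler_normB _ _) _.
  by rewrite mulr2n mulrDl mul1r lerD // cauchyB.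
have ccvg k : cvg (coef (e I) k @[I --> \oo]).
  apply: cauchy_cvg; apply: cauchy_exP => eps eps0.
  have nxb : 0 < `|xb k| by rewrite normr_gt0 xb_neq0.
  have [I0 _ HI0] := geo_small (2 * (2 * M * `|x|) / `|xb k|) eps eps0.
  exists (coef (e I0) k); exists I0 => // J /= I0J.
  rewrite -ball_normE /ball_ /=.
  apply: le_lt_trans (ccauchy k I0 J I0J) _.
  have := HI0 I0 (leqnn _); rewrite /B; congr (_ < _).
  by rewrite /h; field; rewrite lt0r_neq0.
pose g k := lim (coef (e I) k @[I --> \oo]).
have cvgc k : coef (e I) k @[I --> \oo] --> g k by exact: ccvg.
have cvgPn k : PP k (e I) @[I --> \oo] --> SP g k.
  elim: k => [|k IH].
    rewrite /PP /schauder_partial big_geq //.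
    under eq_fun do rewrite big_geq //.
    exact: cvg_cst.
  rewrite /schauder_partial big_nat_recr //=.
  under eq_fun do rewrite PPS.
  apply: cvgD => //; apply: cvgZ => //; exact: cvg_cst.
have bnd k I : `|SP g k - PP k (e I)| <= B I.
  have cv : `|PP k (e J) - PP k (e I)| @[J --> \oo] --> `|SP g k - PP k (e I)|.
    by apply: cvg_norm; apply: cvgB => //; exact: cvg_cst.
  apply: (closed_cvg [set r : R | r <= B I] (@closed_le _ (B I)) _ _ cv).
  exists I => // J /= IJ; rewrite distrC; exact: cauchyB.
have SPg0 : SP g @ \oo --> (0 : X).
  apply/cvgrPdist_lt => eps eps0.
  have eps20 : 0 < eps / 2 by rewrite divr_gt0.
  have [I0 _ HI0] := geo_small ((2 * M + 1) * `|x|) (eps / 2) eps20.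
  have HI := HI0 I0 (leqnn _).
  apply: (filterS _ (cvgr_dist_lt _ _ (PP_cvg (e I0)) _ eps20)) => k /= hk.
  rewrite sub0r normrN.
  have -> : SP g k = (SP g k - PP k (e I0)) + (PP k (e I0) - e I0) + e I0.
    by rewrite !addrA subrK subrK.
  apply: le_lt_trans (ler_normD _ _) _.
  apply: le_lt_trans (lerD (ler_normD _ _) (lexx _)) _.
  have h1 := bnd k I0; have h2 := en I0.
  rewrite distrC in hk.
  have : B I0 + `|x| * h ^+ I0 < eps / 2.
    by move: HI; rewrite /B /h; congr (_ < _); ring.
  lra.
have g0 : g = coef 0 := coef_uniq _ _ SPg0.
have := bnd n 0%N.
rewrite g0 -/(PP n 0) PP0 sub0r normrN /B expr0 mulr1.
by rewrite -mulrA.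
Qed.
Lemma zmod_id3 (V: zmodType) (a b c d : V) : a - d = (a - b) + (b - c) + (c - d).
Proof. have -> : a - b + (b - c) = a - c by rewrite addrA subrK. by rewrite addrA subrK. Qed.

Lemma coef_B x y k : coef (x - y) k = coef x k - coef y k.
Proof.
have -> : x - y = (-1) *: y + x by rewrite scaleN1r addrC.
by rewrite coef_lin mulN1r addrC.
Qed.

Lemma coef_lip k : exists L : R, forall x y, `|coef x k - coef y k| <= L * `|x - y|.
Proof.
have [C C0 HC] := PP_bounded.
have nxb : 0 < `|xb k| by rewrite normr_gt0 xb_neq0.
exists (2 * C / `|xb k|) => x y.
rewrite -coef_B; set z := x - y.
rewrite mulrAC ler_pdivlMr // -normrZ.
have -> : coef z k *: xb k = PP k.+1 z - PP k z by rewrite PPS addrC addKr.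
apply: le_trans (ler_normB _ _) _.
by rewrite mulr2n !mulrDl mul1r lerD.
Qed.

Lemma coef_cont k : continuous (fun x : X => coef x k).
Proof. by have [L HL] := coef_lip k; apply: (@lip_cont R X R _ L). Qed.

Lemma near_seq (s : seq X) (eta : R) : 0 < eta ->
  \forall n \near \oo, forall z, z \in s -> `|PP n z - z| < eta.
Proof.
move=> eta0; elim: s => [|a s IH].
  by near=> n => z; rewrite in_nil.
have ha := cvgr_dist_lt _ _ (PP_cvg a) _ eta0.
have hb : \forall n \near \oo, (`|a - PP n a| < eta) /\
   (forall z, z \in s -> `|PP n z - z| < eta) := filterI (ha _) IH.
near=> n.
have [h1 h2] : `|a - PP n a| < eta /\ (forall z, z \in s -> `|PP n z - z| < eta).
  by near: n; exact: hb.
move=> z.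
rewrite in_cons => /orP [/eqP ->|zs]; last exact: h2.
by rewrite distrC.
Unshelve. all: by end_near. Qed.

Lemma PP_unif (K : set X) : compact K -> forall eta, 0 < eta ->
  \forall n \near \oo, forall x, K x -> `|PP n x - x| <= eta.
Proof.
move=> cK eta eta0.
have [C C0 HC] := PP_bounded.
set rho := eta / (2 * (C + 1)).
have rho0 : 0 < rho by rewrite divr_gt0 // mulr_gt0 // ltr_wpDl // ltW.
rewrite compact_cover in cK.
have [D' sD' cov] := cK X K (fun z => ball z rho) (fun z _ => ball_open z rho)
  (fun x Kx => ex_intro2 (fun i => K i) (fun i => ball i rho x) x Kx (ballxx x rho0)).
have eta20 : 0 < eta / 2 by rewrite divr_gt0.
near=> n.
have hn : forall z, z \in finmap.enum_fset D' -> `|PP n z - z| < eta / 2.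
  by near: n; exact: near_seq.
move=> x Kx.
have [z Dz bz] := cov x Kx.
have hz := hn z Dz.
move: bz; rewrite -ball_normE /ball_ /= => bz.
have -> : PP n x - x = PP n (x - z) + (PP n z - z) + (z - x).
  by rewrite PP_B -zmod_id3.
apply: le_trans (ler_normD _ _) _.
apply: le_trans (lerD (ler_normD _ _) (lexx _)) _.
have h1 := HC n (x - z).
rewrite distrC in h1.
have : (C + 1) * rho = eta / 2 by rewrite /rho; field; rewrite lt0r_neq0 // ltr_wpDl // ltW.
have := normr_ge0 (z - x).
nra.
Unshelve. all: by end_near. Qed.
Lemma coef_vec_cont n : continuous (coef_vec xb n : X -> 'rV[R]_n).
Proof.
have [Lf HL] := choice coef_lip.
apply: (@lip_cont R X _ _ (\sum_(i < n) `|Lf i|)) => x y.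
have -> : `|coef_vec xb n x - coef_vec xb n y| = mx_norm (coef_vec xb n x - coef_vec xb n y) by [].
rewrite mx_normrE; apply: bigmax_le => [|ij _].
  by rewrite mulr_ge0 // sumr_ge0.
rewrite !mxE; apply: le_trans (HL _ _ _) _.
rewrite ler_wpM2r //; apply: le_trans (ler_norm _) _.
by rewrite (bigD1 ij.2) //= lerDl sumr_ge0.
Qed.
End Banach.
Theorem mainTheorem14 (R : realType)
  (X Y : completeNormedModType R) (xb : nat -> X) (yb : nat -> Y)
  (F : forall n m : nat, nat -> set ('rV[R]_n -> 'rV[R]_m)) :
  schauder_basis xb -> schauder_basis yb -> universal_approximator F ->
  forall (f : X -> Y), continuous f ->
  forall (eps : R), 0 < eps ->
  forall (K : set X), compact K ->
  exists n N Q : nat, [/\ (0 < n)%N, (0 < N)%N, (0 < Q)%N &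
    exists (fhat : 'rV[R]_n -> 'rV[R]_N) (z : 'I_N -> 'I_Q -> R),
      (exists c : nat, F n N c fhat) /\
      let that := fun x : X =>
        \sum_(j < N) \sum_(i < Q)
          ((proj_simplex (fhat (coef_vec xb n x))) 0 j * z j i) *: yb i in
      (ereal_sup [set (`|f x - that x|)%:E | x in K] < eps%:E)%E].
Proof.
move=> bx by_ UA f cf eps eps0 K cK.
have [Fmono [r [rdec Hr]]] := UA.
set e4 := eps / 4.
have e40 : 0 < e4 by rewrite divr_gt0.
have hdel : forall x : X, exists d : R, 0 < d /\
    forall x', `|x - x'| < d -> `|f x - f x'| < e4.
  move=> x; have : \forall x' \near x, `|f x - f x'| < e4.
    by apply: cvgr_dist_lt => //; exact: cf.
  move=> /nbhs_ballP [d /= d0 Hd]; exists d; split => // x' hx'.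
  by apply: Hd; rewrite -ball_normE.
have [del Hdel] := choice hdel.
have del0 z : 0 < del z / 2 by rewrite divr_gt0 // (Hdel z).1.
have cK' := cK; rewrite compact_cover in cK'.
have [D' _ cov] := cK' X K (fun z => ball z (del z / 2)) (fun z _ => ball_open z _)
  (fun x Kx => ex_intro2 (fun i => K i) (fun i => ball i (del i / 2) x) x Kx (ballxx x (del0 x))).
pose s := (0 : X) :: finmap.enum_fset D'.
pose Nn := size s.
have Nn0 : (0 < Nn)%N by [].
pose pt (j : 'I_Nn) := nth 0 s j.
have cover_pt : forall x, K x -> exists j : 'I_Nn, `|pt j - x| < del (pt j) / 2.
  move=> x Kx; have [z Dz bz] := cov x Kx.
  have zs : z \in s by rewrite in_cons Dz orbT.
  have zi : (index z s < Nn)%N by rewrite index_mem.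
  exists (Ordinal zi); rewrite /pt /= nth_index //.
  by move: bz; rewrite -ball_normE.
pose yc (j : 'I_Nn) := schauder_coef yb (f (pt j)).
have hQ : \forall Q \near \oo, forall j : 'I_Nn,
    `|f (pt j) - schauder_partial yb (yc j) Q| < e4.
  apply: filter_forall => j.
  by apply: cvgr_dist_lt => //; exact: coef_spec.
have [Q0 _ HQ0] := hQ.
pose Q := Q0.+1.
have hn : \forall m \near \oo, forall j : 'I_Nn, forall x, K x ->
    `|PP R X xb m x - x| <= del (pt j) / 8.
  apply: filter_forall => j; apply: PP_unif => //.
  by rewrite divr_gt0 // (Hdel _).1.
have [n0 _ Hn0] := hn.
pose n := n0.+1.
have hPn := Hn0 n (leqnSn n0).
pose Lc : R := 12.
pose T (v : 'rV[R]_n) : X := \sum_(i < n) v 0 i *: xb i.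
pose g (v : 'rV[R]_n) : 'rV[R]_Nn :=
  \row_(j < Nn) (- (Lc / del (pt j)) * `|T v - pt j|).
pose Sx := \sum_(i < n) `|xb i|.
pose Lam := (\sum_(j < Nn) Lc / del (pt j)) * Sx.
pose om (t : R) := Lam * t.
have Sx0 : 0 <= Sx by rewrite sumr_ge0.
have dpos j : 0 < del (pt j) by exact: (Hdel _).1.
have Tlip v v' : `|T v - T v'| <= eucl_norm (v - v') * Sx.
  rewrite /T -sumrB.
  have -> : \sum_(i < n) (v 0 i *: xb i - v' 0 i *: xb i) =
      \sum_(i < n) (v - v') 0 i *: xb i.
    by apply: eq_bigr => i _; rewrite !mxE scalerBl.
  apply: le_trans (ler_norm_sum _ _ _) _.
  rewrite /Sx mulr_sumr; apply: ler_sum => i _.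
  by rewrite normrZ ler_wpM2r // coord_le_eucl.
have omc : continuous om.
  by apply: (@lip_cont R R R om `|Lam|) => a b; rewrite /om -mulrBr normrM.
have gmod : cont_modulus om g.
  split => //; split; first by rewrite /om mulr0.
  move=> v v'; apply: le_trans (@eucl_le_sum R _ (g v - g v')) _.
  rewrite /om /Lam mulr_suml mulr_suml; apply: ler_sum => j _.
  have cj : 0 <= Lc / del (pt j) by rewrite divr_ge0 // ltW.
  rewrite !mxE -mulrBr normrM normrN (ger0_norm cj).
  rewrite -mulrA ler_wpM2l //.
  apply: le_trans (ler_dist_dist _ _) _.
  rewrite opprB addrA subrK mulrC; exact: Tlip.
pose K' := coef_vec xb n @` K.
have cK'' : compact K'.
  apply: continuous_compact => //; apply: continuous_subspaceT.
  exact: coef_vec_cont.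
have [_ rcv] := rdec n Nn om K' omc cK''.
have hr : \forall c \near \oo, `|0 - r n Nn om K' c| < 2^-1.
  by apply: cvgr_dist_lt => //; rewrite invr_gt0.
have [c0 _ Hc0] := hr.
have rc0 : r n Nn om K' c0 < 2^-1.
  by have := Hc0 c0 (leqnn _); rewrite sub0r normrN; apply: le_lt_trans; exact: ler_norm.
have [hh Fhh Happ] := Hr n Nn g om K' c0 gmod cK''.
exists n, Nn, Q; split => //.
exists hh, (fun j i => yc j i); split; first by exists c0.
move=> that.
apply: (@le_lt_trans _ _ (eps / 2)%:E); last by rewrite lte_fin; lra.
apply: ge_ereal_sup => _ [x Kx <-]; rewrite lee_fin.
pose v := coef_vec xb n x.
pose u := hh v.
pose p := proj_simplex u.
have Tv : T v = PP R X xb n x.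
  rewrite /T /PP /schauder_partial big_mkord; apply: eq_bigr => i _.
  by rewrite mxE.
have Kv : K' v by exists x.
have happ j : `|u 0 j - g v 0 j| <= 2^-1.
  apply: le_trans (ltW rc0); apply: le_trans (Happ v Kv).
  have := @coord_le_eucl R _ (g v - u) j.
  by rewrite [(g v - u) 0 j]mxE [(- u) 0 j]mxE distrC.
have gv j : g v 0 j = - (Lc / del (pt j)) * `|PP R X xb n x - pt j|.
  by rewrite mxE Tv.
have ccd j : Lc / del (pt j) * del (pt j) = 12.
  by rewrite /Lc; field; rewrite lt0r_neq0.
have cc0 j : 0 < Lc / del (pt j) by rewrite divr_gt0.
have hb j : - 2^-1 <= u 0 j - g v 0 j <= 2^-1 by rewrite -ler_norml.
have [j0 hj0] := cover_pt x Kx.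
have uj0 : -8 <= u 0 j0.
  have h1 : `|PP R X xb n x - pt j0| <= del (pt j0) / 8 + del (pt j0) / 2.
    rewrite -(subrK x (PP R X xb n x)) -addrA.
    apply: le_trans (ler_normD _ _) _; apply: lerD; first exact: hPn.
    by rewrite distrC ltW.
  have := hb j0; rewrite gv => /andP [h2 _].
  have := cc0 j0; have := ccd j0; have := normr_ge0 (PP R X xb n x - pt j0).
  have : 2^-1 = 1/2 :> R by rewrite div1r.
  nra.
have support k : ~ (`|pt k - x| < del (pt k)) -> p 0 k = 0.
  move=> /negP; rewrite -leNgt => nk.
  apply: (@proj_simplex_support R Nn u k j0).
  have h1 : del (pt k) - del (pt k) / 8 <= `|PP R X xb n x - pt k|.
    have h3 := hPn k x Kx.
    have h4 : `|pt k - x| <= `|PP R X xb n x - pt k| + `|PP R X xb n x - x|.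
      have -> : pt k - x = (pt k - PP R X xb n x) + (PP R X xb n x - x).
        by rewrite addrA subrK.
      apply: le_trans (ler_normD _ _) _.
      by rewrite (distrC (pt k)).
    lra.
  have := hb k; rewrite gv => /andP [_ h2].
  have := cc0 k; have := ccd k.
  have : 2^-1 = 1/2 :> R by rewrite div1r.
  nra.
pose w j := schauder_partial yb (yc j) Q.
have thatE : that x = \sum_j p 0 j *: w j.
  rewrite /that; apply: eq_bigr => j _.
  rewrite /w /schauder_partial big_mkord scaler_sumr; apply: eq_bigr => i _.
  by rewrite scalerA.
have [p0 p1] : simplex p := @proj_simplex_in R Nn u Nn0.
have fxE : f x - that x = \sum_j p 0 j *: (f x - w j).
  have -> : \sum_j p 0 j *: (f x - w j) = \sum_j (p 0 j *: f x - p 0 j *: w j).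
    by apply: eq_bigr => j _; rewrite scalerBr.
  by rewrite sumrB -scaler_suml p1 scale1r thatE.
rewrite fxE; apply: le_trans (ler_norm_sum _ _ _) _.
have -> : eps / 2 = \sum_j p 0 j * (eps / 2) by rewrite -mulr_suml p1 mul1r.
apply: ler_sum => j _; rewrite normrZ ger0_norm //.
case: (pselect (`|pt j - x| < del (pt j))) => hj; last by rewrite support // !mul0r.
apply: ler_wpM2l => //.
have h1 := (Hdel (pt j)).2 x hj.
have h2 := HQ0 Q (leqnSn Q0) j.
have -> : f x - w j = (f (pt j) - w j) - (f (pt j) - f x).
  by rewrite opprB [RHS]addrC addrA subrK.
apply: le_trans (ler_normB _ _) _; rewrite /e4 in h1 h2; lra.
Qed.
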